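(* Consider $N\ge 2$ users indexed by $\mathcal{U}=\{1,\dots,N\}$ with fixed channel power gains $h_1,\dots,h_N>0$, noise variance $\eta>0$, target throughputs $\theta_1,\dots,\theta_N>0$, and strategy sets $\mathcal{P}^i=[0,P_i^{max}]$ with $P_i^{max}>0$. For $\mathbf{P}\in\prod_i\mathcal{P}^i$ let $r_i(\mathbf{P})=\log_2\!\big(1+\frac{h_iP_i}{\eta+\sum_{j\neq i}h_jP_j}\big)$, and let $\mathcal{S}$ be the set of profiles with $r_i(\mathbf{P})\ge\theta_i$ for all $i$. Suppose $\mathcal{S}\neq\emptyset$. Then an efficient satisfaction equilibrium $\mathbf{P}^+$ (a minimizer of $\sum_iP_i$ over $\mathcal{S}$) exists and is satisfactory Pareto optimal: for every $i\in\mathcal{U}$ and every $p\in\mathcal{P}^i$ with $r_i(p,\mathbf{P}^+_{-i})>r_i(\mathbf{P}^+)$, there exists $j\neq i$ with $r_j(p,\mathbf{P}^+_{-i})<\theta_j$.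
   Context: $(p,\mathbf{P}^+_{-i})$ denotes the profile obtained from $\mathbf{P}^+$ by replacing user $i$'s power with $p$. Satisfactory Pareto optimality means that no player can increase its payoff (by changing its own power) without dissatisfying (pushing below its target) some of its opponents. *)

(* Defs.v *)
From HB Require Import structures.
From mathcomp Require Import all_boot all_order all_algebra.
From mathcomp Require Import all_classical all_reals all_analysis.
Set Implicit Arguments. Unset Strict Implicit. Unset Printing Implicit Defensive.
Import Order.TTheory GRing.Theory Num.Theory.
Local Open Scope ring_scope.

Section PowerGame.
Variables (R : realType) (N : nat).

Definition log2 (x : R) : R := ln x / ln 2.

Definition feasible (Pmax : 'I_N -> R) (P : 'I_N -> R) : Prop :=
  forall i, 0 <= P i <= Pmax i.

Definition rate (h : 'I_N -> R) (eta : R) (P : 'I_N -> R) (i : 'I_N) : R :=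
  log2 (1 + h i * P i / (eta + \sum_(j < N | j != i) h j * P j)).

Definition upd (P : 'I_N -> R) (i : 'I_N) (p : R) : 'I_N -> R :=
  fun j => if j == i then p else P j.

Definition satisfying h eta (theta Pmax : 'I_N -> R) (P : 'I_N -> R) : Prop :=
  feasible Pmax P /\ forall i, theta i <= rate h eta P i.

Definition ESE h eta (theta Pmax : 'I_N -> R) (P : 'I_N -> R) : Prop :=
  satisfying h eta theta Pmax P /\
  forall Q, satisfying h eta theta Pmax Q -> \sum_(i < N) P i <= \sum_(i < N) Q i.

Definition sat_pareto_opt h eta (theta Pmax : 'I_N -> R) (P : 'I_N -> R) : Prop :=
  forall (i : 'I_N) (p : R), 0 <= p <= Pmax i ->
    rate h eta P i < rate h eta (upd P i p) i ->
    exists j : 'I_N, j != i /\ rate h eta (upd P i p) j < theta j.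

End PowerGame.

(* Main.v *)
Require Import Defs.
From HB Require Import structures.
From mathcomp Require Import all_boot all_order all_algebra.
From mathcomp Require Import all_classical all_reals all_analysis.
From mathcomp Require Import lra.
Import Order.TTheory GRing.Theory Num.Theory.
Local Open Scope ring_scope.

Section Helpers.
Variables (R : realType) (N : nat).

Definition cth (t : R) : R := expR (t * ln 2) - 1.

Lemma ln2_gt0 : 0 < ln (2 : R).
Proof. apply: ln_gt0; lra. Qed.

Lemma key (t x : R) : 0 <= x -> (t <= log2 (1 + x)) = (cth t <= x).
Proof.
move=> x0; rewrite /log2 ler_pdivlMr ?ln2_gt0 //.
have -> : (t * ln 2 <= ln (1 + x)) = (expR (t * ln 2) <= expR (ln (1 + x))).
  by rewrite ler_expR.
rewrite (@lnK R (1 + x)); last by rewrite posrE; lra.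
rewrite /cth; apply/idP/idP => H; lra.
Qed.

Lemma cth_gt0 (t : R) : 0 < t -> 0 < cth t.
Proof.
move=> t0; rewrite /cth subr_gt0 -[X in X < _]expR0 ltr_expR.
by apply: mulr_gt0 => //; exact: ln2_gt0.
Qed.

Lemma log2_le (x y : R) : 0 <= x -> x <= y -> log2 (1 + x) <= log2 (1 + y).
Proof.
move=> x0 xy; rewrite /log2 ler_pM2r ?invr_gt0 ?ln2_gt0 //.
by rewrite ler_ln ?posrE; lra.
Qed.

Definition I (h P : 'I_N -> R) (k : 'I_N) := \sum_(j < N | j != k) h j * P j.

Lemma I_ge0 (h P : 'I_N -> R) (k : 'I_N) : (forall j, 0 < h j) -> (forall j, 0 <= P j) -> 0 <= I h P k.
Proof.
move=> hp Pp; apply: sumr_ge0 => j _; apply: mulr_ge0 => //.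
exact: ltW.
Qed.

Lemma I_upd_same (h P : 'I_N -> R) (i : 'I_N) (p : R) : I h (upd P i p) i = I h P i.
Proof. by apply: eq_bigr => j Hj; rewrite /upd (negbTE Hj). Qed.

Lemma I_upd_other (h P : 'I_N -> R) (i : 'I_N) (p : R) (k : 'I_N) : k != i ->
  I h (upd P i p) k = I h P k + h i * (p - P i).
Proof.
move=> ki; rewrite /I (bigD1 i) 1?eq_sym //= [in RHS](bigD1 i) 1?eq_sym //=.
rewrite /upd eqxx.
have -> : \sum_(j < N | (j != k) && (j != i)) h j * (if j == i then p else P j)
        = \sum_(j < N | (j != k) && (j != i)) h j * P j.
  by apply: eq_bigr => j /andP[_ Hj]; rewrite (negbTE Hj).
rewrite mulrBr; lra.
Qed.

Lemma sum_upd (P : 'I_N -> R) i q : \sum_(j < N) upd P i q j = \sum_(j < N) P j + (q - P i).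
Proof.
rewrite (bigD1 i) //= [in RHS](bigD1 i) //= /upd eqxx.
have -> : \sum_(j < N | true && (j != i)) (if j == i then q else P j)
        = \sum_(j < N | true && (j != i)) P j.
  by apply: eq_bigr => j /andP[_ Hj]; rewrite (negbTE Hj).
lra.
Qed.

Lemma rate_I (h : 'I_N -> R) (eta : R) (P : 'I_N -> R) (i : 'I_N) : rate h eta P i = log2 (1 + h i * P i / (eta + I h P i)).
Proof. by []. Qed.

Lemma sat_iff (h : 'I_N -> R) (eta : R) (P : 'I_N -> R) (i : 'I_N) (t : R) : (forall j, 0 < h j) -> 0 < eta -> (forall j, 0 <= P j) ->
  (t <= rate h eta P i) = (cth t * (eta + I h P i) <= h i * P i).
Proof.
move=> hp e0 Pp; have D0 : 0 < eta + I h P i by have := @I_ge0 h P i hp Pp; lra.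
rewrite rate_I key; first by rewrite ler_pdivlMr.
apply: divr_ge0; last exact: ltW.
apply: mulr_ge0; [exact: ltW | exact: Pp].
Qed.

End Helpers.
Arguments I {R N}.
Arguments cth {R}.
Arguments cth_gt0 {R}.

Theorem corollary2 (R : realType) (N : nat) (h theta Pmax : 'I_N -> R) (eta : R) :
  (2 <= N)%N ->
  (forall i, 0 < h i) -> 0 < eta -> (forall i, 0 < theta i) -> (forall i, 0 < Pmax i) ->
  (exists P, satisfying h eta theta Pmax P) ->
  (exists P, ESE h eta theta Pmax P) /\
  (forall P, ESE h eta theta Pmax P -> sat_pareto_opt h eta theta Pmax P).
Proof.
move=> N2 hp e0 tp Pmp [P0 HP0].
have Pnn : forall P, satisfying h eta theta Pmax P -> forall j, 0 <= P j.
  by move=> P [F _] j; case/andP: (F j).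
split.
- pose E (i : 'I_N) : set R := [set x : R | exists P : 'I_N -> R, satisfying h eta theta Pmax P /\ x = P i]%classic.
  pose m i := inf (E i).
  have En : forall i, (E i !=set0)%classic by move=> i; exists (P0 i); exists P0.
  have Elb : forall i, has_lbound (E i).
    by move=> i; exists 0 => x [P [HP ->]]; exact: Pnn.
  have mle : forall P i, satisfying h eta theta Pmax P -> m i <= P i.
    by move=> P i HP; apply: (ge_inf (Elb i)); exists P.
  have m0 : forall i, 0 <= m i.
    by move=> i; apply: lb_le_inf => // x [P [HP ->]]; exact: Pnn.
  have msat : satisfying h eta theta Pmax m.
    split.
      move=> i; rewrite m0 /=; apply: le_trans (mle _ _ HP0) _.
      by case: HP0 => F _; case/andP: (F i).
    move=> i; rewrite sat_iff //.
    rewrite [X in _ <= X]mulrC -ler_pdivrMr //.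
    apply: lb_le_inf => // x [P [HP ->]].
    rewrite ler_pdivrMr // [X in _ <= X]mulrC; apply: (@le_trans _ _ (cth (theta i) * (eta + I h P i))).
      rewrite ler_pM2l ?cth_gt0 // lerD2l; apply: ler_sum => j _.
      by rewrite ler_pM2l //; exact: mle.
    by rewrite -sat_iff //; [case: HP | exact: Pnn].
  exists m; split => // Q HQ; apply: ler_sum => i _; exact: mle.
- move=> P [HP Pmin] i p /andP[p0 pM] Hlt.
  have Pp := Pnn _ HP.
  have pgt : P i < p.
    rewrite ltNge; apply/negP => pP; move: Hlt; rewrite !rate_I I_upd_same.
    rewrite /upd eqxx ltNge => /negP; apply; apply: log2_le.
      apply: divr_ge0; first by apply: mulr_ge0 => //; exact: ltW.
      by have := @I_ge0 _ _ h P i hp Pp; lra.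
    rewrite ler_pM2r; last by rewrite invr_gt0; have := @I_ge0 _ _ h P i hp Pp; lra.
    by rewrite ler_pM2l.
  have [j ji] : exists j : 'I_N, j != i.
    case: (eqVneq i (Ordinal (ltn_trans (isT : (0 < 1)%N) N2))) => [ei|ne].
      by exists (Ordinal N2); rewrite ei.
    by exists (Ordinal (ltn_trans (isT : (0 < 1)%N) N2)); rewrite eq_sym.
  exists j; split => //.
  have tight : h j * P j <= cth (theta j) * (eta + I h P j).
    rewrite leNgt; apply/negP => Hs.
    pose q := cth (theta j) * (eta + I h P j) / h j.
    have qlt : q < P j by rewrite /q ltr_pdivrMr // [X in _ < X]mulrC.
    have q0 : 0 <= q.
      rewrite /q; apply: divr_ge0; last exact: ltW.
      apply: mulr_ge0.  exact: ltW (cth_gt0 _ (tp j)). 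
      by have := @I_ge0 _ _ h P j hp Pp; lra.
    have Qsat : satisfying h eta theta Pmax (upd P j q).
      have Qp : forall k, 0 <= upd P j q k by move=> k; rewrite /upd; case: ifP.
      split.
        move=> k; rewrite Qp /=; case: HP => F _.
        move: (F k) (F j) => /andP[_ Hk] /andP[_ Hj]; rewrite /upd.
        by case: ifP => [/eqP->|_] //; lra.
      move=> k; rewrite sat_iff //; case: (eqVneq k j) => [->|kj].
        rewrite I_upd_same /upd eqxx /q [h j * _]mulrC divfK //; exact: lt0r_neq0.
      rewrite I_upd_other // /upd (negbTE kj).
      apply: (@le_trans _ _ (cth (theta k) * (eta + I h P k))).
        rewrite ler_pM2l ?cth_gt0 //; have : h j * (q - P j) <= 0.
          by apply: mulr_ge0_le0; [exact: ltW | lra].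
        lra.
      by rewrite -sat_iff //; case: HP.
    have := Pmin _ Qsat; rewrite sum_upd; lra.
  rewrite ltNge sat_iff //; last by move=> k; rewrite /upd; case: ifP.
  rewrite -ltNge I_upd_other // /upd (negbTE ji).
  apply: le_lt_trans tight _.
  rewrite ltr_pM2l ?cth_gt0 // ltrD2l ltrDl.
  by apply: mulr_gt0 => //; rewrite subr_gt0.
Qed.
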